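(* Let $N$ be a tree-child phylogenetic network such that no two parents of a hybrid node are connected by a path, and let $N'=(V',E')$ be its contracted version. For every $u\in V'$ let $M_u=\{w\in V'\mid C^{(N')}(w)\subsetneq C^{(N')}(u)\}$. Then the maximal elements of $M_u$ with respect to the path ordering on $N'$ are exactly the children of $u$ in $N'$.
   Context: A DAG is labeled in a finite set $S$ if its leaves (out-degree 0) are bijectively labeled by $S$. A tree node has in-degree at most 1; a hybrid node has in-degree greater than 1; a tree child is a child that is a tree node. A tree-child phylogenetic network is a rooted DAG labeled in $S$ in which every non-leaf node has at least one tree child, no tree node has out-degree 1, and every hybrid node has out-degree exactly 1. The condition that no two parents of a hybrid node are connected by a path means: if $u_1,u_2$ are the parents of a hybrid node, there is no path $u_1\rightsquigarrow u_2$ nor $u_2\rightsquigarrow u_1$. The contracted version $N'$ of $N$ is obtained as follows: for every hybrid node $u$ of $N$, with only child $\bar u$ whose children are $\bar u_1,\dots,\bar u_k$, remove $\bar u$ and all arcs incident to it, and add arcs $(u,\bar u_1),\dots,(u,\bar u_k)$; thus $V'$ is the set of nodes of $N$ other than children of hybrid nodes. $C^{(N')}(w)$ is the set of leaves that are descendants of $w$ in $N'$. The path ordering on $N'$ is $x\ge y$ iff there is a path from $x$ to $y$ in $N'$. *)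

(* Defs.v *)
From mathcomp Require Import all_boot.
Set Implicit Arguments. Unset Strict Implicit. Unset Printing Implicit Defensive.

Section Networks.
Variable V : finType.
Variable E : rel V.

Definition indeg (v : V) : nat := #|[set u | E u v]|.
Definition outdeg (v : V) : nat := #|[set w | E v w]|.

Definition is_leaf (v : V) : bool := outdeg v == 0.
Definition is_tree_node (v : V) : bool := indeg v <= 1.
Definition is_hybrid (v : V) : bool := 1 < indeg v.

Definition acyclic : Prop := forall u v, E u v -> ~~ connect E v u.

Definition rooted : Prop :=
  exists r, indeg r = 0 /\ forall v, connect E r v.

Definition labeled_in (S : finType) (lab : V -> S) : Prop :=
  {in is_leaf &, injective lab} /\ forall s : S, exists2 v, is_leaf v & lab v = s.

Definition tree_child_network (S : finType) (lab : V -> S) : Prop :=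
  [/\ acyclic, rooted, labeled_in lab &
      [/\ (forall v, ~~ is_leaf v -> exists w, E v w && is_tree_node w),
           (forall v, is_tree_node v -> outdeg v != 1)
         & (forall v, is_hybrid v -> outdeg v = 1)]].

Definition no_parent_paths : Prop :=
  forall h u1 u2, is_hybrid h -> E u1 h -> E u2 h -> u1 != u2 ->
    ~~ connect E u1 u2 /\ ~~ connect E u2 u1.

Definition inV' (v : V) : bool := ~~ [exists u, is_hybrid u && E u v].

Definition E' : rel V := fun x y =>
  [&& inV' x, inV' y &
      E x y || (is_hybrid x && [exists z, E x z && E z y])].

Definition outdeg' (v : V) : nat := #|[set w | E' v w]|.
Definition is_leaf' (v : V) : bool := inV' v && (outdeg' v == 0).

Definition cluster' (w : V) : {set V} := [set x | is_leaf' x && connect E' w x].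

Definition path_ge' (x y : V) : bool := connect E' x y.

Definition M_set (u : V) : {set V} :=
  [set w | inV' w && (cluster' w \proper cluster' u)].

Definition maximal_in (A : {set V}) (w : V) : Prop :=
  w \in A /\ forall w', w' \in A -> path_ge' w' w -> w' = w.

End Networks.

(* Main.v *)
Require Import Defs.
From mathcomp Require Import all_boot.
Set Implicit Arguments. Unset Strict Implicit.

Lemma card_le1_eq (T : finType) (A : {set T}) a b : #|A| <= 1 -> a \in A -> b \in A -> a = b.
Proof.
move=> h ha hb; apply/eqP; apply: contraTT h => nab.
rewrite -ltnNge; apply: (@leq_trans #|[set a; b]|); last by apply: subset_leq_card; apply/subsetP=> x; rewrite !inE => /orP[] /eqP->.
by rewrite cards2 nab.
Qed.

Lemma card_ge2_other (T : finType) (A : {set T}) a : 1 < #|A| -> exists2 c, c \in A & c != a.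
Proof.
move=> h; have : 0 < #|A :\ a|.
  move: h; rewrite (cardsD1 a A); case: (a \in A) => /=; first by [].
  by move=> h; apply: ltn_trans h.
case/card_gt0P => c; rewrite !inE => /andP[ca cA]; by exists c.
Qed.

Lemma last_step (T : finType) (e : rel T) x y :
  connect e x y -> x != y -> exists2 p, connect e x p & e p y.
Proof.
case/connectP => s; elim/last_ind: s => [|s z _] /=; first by move=> _ ->; rewrite eqxx.
rewrite rcons_path last_rcons => /andP[ps ez] -> _.
exists (last x s) => //; apply/connectP; by exists s.
Qed.

Lemma first_step (T : finType) (e : rel T) x y :
  connect e x y -> x != y -> exists2 c, e x c & connect e c y.
Proof.
case/connectP => [[|c s]] /=; first by move=> _ ->; rewrite eqxx.
move=> /andP[exc ps] ->  _; exists c => //; apply/connectP; by exists s.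
Qed.

Lemma E'_inv (V : finType) (E : rel V) x y : E' E x y ->
  [/\ inV' E x, inV' E y & (E x y \/ exists2 z, is_hybrid E x & E x z /\ E z y)].
Proof.
case/and3P => hx hy /orP[h|/andP[hh /existsP[z /andP[a b]]]]; split => //; [by left | right; by exists z].
Qed.

Lemma E'_direct (V : finType) (E : rel V) x y : inV' E x -> inV' E y -> E x y -> E' E x y.
Proof. by move=> hx hy h; rewrite /E' hx hy h. Qed.

Lemma E'_hyb (V : finType) (E : rel V) x z y : inV' E x -> inV' E y -> is_hybrid E x -> E x z -> E z y -> E' E x y.
Proof.
move=> hx hy hh a b; rewrite /E' hx hy hh /=; apply/orP; right; apply/existsP; exists z; by rewrite a b.
Qed.

Lemma hyb_child_uniq (V : finType) (E : rel V) :
  (forall v, is_hybrid E v -> outdeg E v = 1) ->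
  forall h a b, is_hybrid E h -> E h a -> E h b -> a = b.
Proof.
move=> H h a b hh ha hb; apply: (@card_le1_eq _ [set w | E h w]); rewrite ?inE //.
by rewrite -/(outdeg E h) H.
Qed.

Lemma tree_par_uniq (V : finType) (E : rel V) t a b :
  is_tree_node E t -> E a t -> E b t -> a = b.
Proof. by move=> ht ha hb; apply: (@card_le1_eq _ [set u | E u t]); rewrite ?inE. Qed.

Lemma nonleaf (V : finType) (E : rel V) v w : E v w -> ~~ is_leaf E v.
Proof. by move=> h; rewrite /is_leaf /outdeg -lt0n; apply/card_gt0P; exists w; rewrite inE. Qed.

Lemma hyb_child_tree (V : finType) (E : rel V) :
  (forall v, is_hybrid E v -> outdeg E v = 1) ->
  (forall v, ~~ is_leaf E v -> exists w, E v w && is_tree_node E w) ->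
  forall h z, is_hybrid E h -> E h z -> is_tree_node E z.
Proof.
move=> H1 Htc h z hh hz; have [t /andP[ht tt]] := Htc h (nonleaf hz).
by rewrite -(hyb_child_uniq H1 hh ht hz).
Qed.

Lemma two_par_hyb (V : finType) (E : rel V) a b w : E a w -> E b w -> a != b -> is_hybrid E w.
Proof.
move=> ha hb nab; rewrite /is_hybrid ltnNge; apply/negP => h.
by move: nab; rewrite (@card_le1_eq _ [set u | E u w] a b h) ?inE ?eqxx.
Qed.

Lemma not_inV' (V : finType) (E : rel V) h z : is_hybrid E h -> E h z -> ~~ inV' E z.
Proof. by move=> hh hz; rewrite /inV' negbK; apply/existsP; exists h; rewrite hh hz. Qed.

Lemma tree_not_hyb (V : finType) (E : rel V) v : is_tree_node E v -> ~~ is_hybrid E v.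
Proof. by rewrite /is_hybrid -leqNgt. Qed.

Lemma nonhyb_child_inV (V : finType) (E : rel V) :
  (forall v, is_hybrid E v -> outdeg E v = 1) ->
  (forall v, ~~ is_leaf E v -> exists w, E v w && is_tree_node E w) ->
  forall x c, ~~ is_hybrid E x -> E x c -> inV' E c.
Proof.
move=> H1 Htc x c hx hc; apply/negP => /existsP[h /andP[hh ehc]].
have tc := hyb_child_tree H1 Htc hh ehc.
by move: hx; rewrite (tree_par_uniq tc hc ehc) hh.
Qed.

Lemma tree_outdeg2 (V : finType) (E : rel V) :
  (forall v, is_tree_node E v -> outdeg E v != 1) ->
  forall v w, is_tree_node E v -> E v w -> 1 < outdeg E v.
Proof.
move=> Hto v w tv h; have := Hto v tv; have := nonleaf h; rewrite /is_leaf.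
by case: (outdeg E v) => [|[|n]].
Qed.

Lemma E'_connect (V : finType) (E : rel V) x y : connect (E' E) x y -> connect E x y.
Proof.
apply: connect_sub => a b /E'_inv [_ _ [h|[z _ [h1 h2]]]]; first exact: connect1.
by apply: (connect_trans (connect1 h1)); apply: connect1.
Qed.

Lemma acyc' (V : finType) (E : rel V) : acyclic E ->
  forall x y, E' E x y -> ~~ connect (E' E) y x.
Proof.
move=> Hac x y /E'_inv [_ _ [h|[z _ [h1 h2]]]]; apply/negP => /E'_connect c.
  by move/negP: (Hac _ _ h).
by move/negP: (Hac _ _ h1); apply; apply: connect_trans (connect1 h2) c.
Qed.

Lemma P' (V : finType) (E : rel V) :
  (forall v, is_hybrid E v -> outdeg E v = 1) ->
  (forall v, ~~ is_leaf E v -> exists w, E v w && is_tree_node E w) ->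
  no_parent_paths E ->
  forall u p w, E' E u w -> E' E p w -> u != p -> ~~ connect (E' E) u p.
Proof.
move=> H1 Htc Hnp u p w hu hp nup; apply/negP => /E'_connect c.
suff [a [b [ha hb nab cab]]] : exists a b, [/\ E a w, E b w, a != b & connect E a b].
  by have [/negP] := Hnp w a b (two_par_hyb ha hb nab) ha hb nab.
case/E'_inv: hu => iu _ [eu|[z1 hu [u1 z1w]]]; case/E'_inv: hp => ip _ [ep|[z2 hp [p2 z2w]]].
- by exists u, p.
- exists u, z2; split => //; last by apply: connect_trans c (connect1 p2).
  by apply: contraNneq (not_inV' hp p2) => <-.
- have [c1 uc1 c1p] := first_step c nup; rewrite (hyb_child_uniq H1 hu uc1 u1) in c1p.
  exists z1, p; split => //; by apply: contraNneq (not_inV' hu u1) => ->.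
- have [c1 uc1 c1p] := first_step c nup; rewrite (hyb_child_uniq H1 hu uc1 u1) in c1p.
  exists z1, z2; split => //; last by apply: connect_trans c1p (connect1 p2).
  apply: contraNneq nup => ez; rewrite -ez in p2.
  by rewrite (tree_par_uniq (hyb_child_tree H1 Htc hu u1) u1 p2).
Qed.

Lemma A' (V : finType) (E : rel V) :
  (forall v, is_hybrid E v -> outdeg E v = 1) ->
  (forall v, ~~ is_leaf E v -> exists w, E v w && is_tree_node E w) ->
  forall x w, E' E x w -> exists t, E' E x t /\ forall y, E' E y t -> y = x.
Proof.
move=> H1 Htc x w /E'_inv [ix iw [exw|[z hx [xz zw]]]].
- case: (boolP (is_hybrid E x)) => hx.
    by move: iw; have /negP := not_inV' hx exw.
  have [t /andP[xt tt]] := Htc x (nonleaf exw).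
  have it := nonhyb_child_inV H1 Htc hx xt.
  exists t; split; first exact: E'_direct.
  move=> y /E'_inv [iy _ [yt|[z' hy [yz zt]]]]; first exact: tree_par_uniq tt yt xt.
  by move: ix; rewrite -(tree_par_uniq tt zt xt) (negbTE (not_inV' hy yz)).
- have tz := hyb_child_tree H1 Htc hx xz.
  have [t /andP[zt tt]] := Htc z (nonleaf zw).
  have it := nonhyb_child_inV H1 Htc (tree_not_hyb tz) zt.
  exists t; split; first exact: E'_hyb ix it hx xz zt.
  move=> y /E'_inv [iy _ [yt|[z' hy [yz zt']]]].
    by move: iy; rewrite (tree_par_uniq tt yt zt) (negbTE (not_inV' hx xz)).
  rewrite (tree_par_uniq tt zt' zt) in yz.
  exact: tree_par_uniq tz yz xz.
Qed.

Lemma D' (V : finType) (E : rel V) :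
  (forall v, is_hybrid E v -> outdeg E v = 1) ->
  (forall v, ~~ is_leaf E v -> exists w, E v w && is_tree_node E w) ->
  (forall v, is_tree_node E v -> outdeg E v != 1) ->
  forall x w, E' E x w -> exists c, E' E x c /\ c != w.
Proof.
move=> H1 Htc Hto x w /E'_inv [ix iw [exw|[z hx [xz zw]]]].
- case: (boolP (is_hybrid E x)) => hx.
    by move: iw; have /negP := not_inV' hx exw.
  have tx : is_tree_node E x by rewrite /is_tree_node leqNgt.
  have [c] := card_ge2_other w (tree_outdeg2 Hto tx exw); rewrite inE => xc cw.
  exists c; split => //; apply: E'_direct => //; first exact: (nonhyb_child_inV H1 Htc hx xc).
- have tz := hyb_child_tree H1 Htc hx xz.
  have [c' zc cw] := card_ge2_other w (tree_outdeg2 Hto tz zw); rewrite inE in zc.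
  exists c'; split => //; apply: (E'_hyb ix _ hx xz zc).
  exact: (nonhyb_child_inV H1 Htc (tree_not_hyb tz) zc).
Qed.


Lemma tleaf (V : finType) (E : rel V) :
  (forall x y, E' E x y -> ~~ connect (E' E) y x) ->
  (forall x w, E' E x w -> exists t, E' E x t /\ forall y, E' E y t -> y = x) ->
  forall x, inV' E x -> exists l, [/\ is_leaf' E l, connect (E' E) x l &
     forall y, connect (E' E) y l -> connect (E' E) y x || connect (E' E) x y].
Proof.
move=> Hac HA x; have [n] := ubnP #|[set y | connect (E' E) x y]|.
elim: n x => // n IH x Hn Hx.
case: (boolP [exists w, E' E x w]) => [/existsP[w xw]|Hno].
- have [t [xt tu]] := HA x w xw.
  have lt : #|[set y | connect (E' E) t y]| < #|[set y | connect (E' E) x y]|.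
    apply: proper_card; rewrite properE; apply/andP; split.
      apply/subsetP => y; rewrite !inE; exact: connect_trans (connect1 xt).
    apply/subsetPn; exists x; rewrite !inE ?connect0 //; exact: Hac.
  have [_ it _] := E'_inv xt.
  have [l [ll tl Pl]] := IH t (leq_trans lt Hn) it.
  exists l; split => //; first exact: connect_trans (connect1 xt) tl.
  move=> y yl; case/orP: (Pl y yl) => [yt|ty]; last by rewrite (connect_trans (connect1 xt) ty) orbT.
  case: (eqVneq y t) => [->|nyt]; first by rewrite (connect1 xt) orbT.
  have [p yp pt] := last_step yt nyt; by rewrite -(tu p pt) yp.
- exists x; split => //; last by move=> y ->.
  rewrite /is_leaf' Hx /outdeg' /=; apply/eqP; apply: eq_card0 => w; rewrite inE.
  by apply/negbTE; move/existsPn: Hno.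
Qed.

Lemma sibling (V : finType) (E : rel V) :
  (forall x y, E' E x y -> ~~ connect (E' E) y x) ->
  (forall u p w, E' E u w -> E' E p w -> u != p -> ~~ connect (E' E) u p) ->
  forall u a b, E' E u a -> E' E u b -> a != b -> ~~ connect (E' E) a b.
Proof.
move=> Hac HP u a b ua ub nab; apply/negP => c.
have [p ap pb] := last_step c nab.
case: (eqVneq p u) => [epu|npu].
  by move/negP: (Hac _ _ ua); rewrite -epu.
have nup : u != p by rewrite eq_sym.
by move/negP: (HP u p b ub pb nup); apply; exact: connect_trans (connect1 ua) ap.
Qed.

Lemma cluster_mono (V : finType) (E : rel V) a b : connect (E' E) a b -> cluster' E b \subset cluster' E a.
Proof.
move=> ab; apply/subsetP => l; rewrite !inE => /andP[-> bl] /=; exact: connect_trans ab bl.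
Qed.

Theorem lemma7 (S V : finType) (E : rel V) (lab : V -> S) :
  tree_child_network E lab ->
  no_parent_paths E ->
  forall u, inV' E u ->
  forall w, maximal_in E (M_set E u) w <-> E' E u w.
Proof.
case => Hac _ _ [Htc Hto H1] Hnp u iu w.
have Hac' := acyc' Hac. have HP := P' H1 Htc Hnp. have HA := A' H1 Htc.
have HD := D' H1 Htc Hto.
have childM : forall w', E' E u w' -> w' \in M_set E u.
  move=> w' uw; have [_ iw _] := E'_inv uw.
  rewrite inE iw /= properE cluster_mono ?connect1 //=.
  have [c [uc cw]] := HD u w' uw; have [_ ic _] := E'_inv uc.
  have [l [ll cl Pl]] := tleaf Hac' HA ic.
  apply/subsetPn; exists l; rewrite !inE ll /=; first exact: connect_trans (connect1 uc) cl.
  apply/negP => wl; case/orP: (Pl w' wl) => h.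
    have nwc : w' != c by rewrite eq_sym.
    by move/negP: (sibling Hac' HP uw uc nwc).
  by move/negP: (sibling Hac' HP uc uw cw).
split.
- case => wM wmax; move: (wM); rewrite inE => /andP[iw pr].
  have [l [ll wl Pl]] := tleaf Hac' HA iw.
  have : l \in cluster' E u by apply: (subsetP (proper_sub pr)); rewrite inE ll.
  rewrite inE ll /= => ul.
  case/orP: (Pl u ul) => [uw | wu]; last first.
    by move: pr; rewrite properE (cluster_mono wu) andbF.
  case: (eqVneq u w) => [euw|nuw]; first by move: pr; rewrite euw properxx.
  have [c uc cw] := first_step uw nuw.
  by rewrite -(wmax c (childM c uc) cw).
- move=> uw; split; first exact: childM.
  move=> w' w'M w'w; apply/eqP; apply/negP => nw.
  have [p w'p pw] := last_step w'w (introT negP nw).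
  case: (eqVneq p u) => [epu|npu].
    move: w'M; rewrite inE => /andP[_]; rewrite properE -epu (cluster_mono w'p) andbF.
    by [].
  have nup : u != p by rewrite eq_sym.
  have /negP nup1 := HP u p w uw pw nup.
  have /negP npu1 := HP p u w pw uw npu.
  have [t [pt tu]] := HA p w pw; have [_ it _] := E'_inv pt.
  have [l [ll tl Pl]] := tleaf Hac' HA it.
  have lw' : l \in cluster' E w'.
    by rewrite inE ll /=; apply: connect_trans w'p (connect_trans (connect1 pt) tl).
  move: w'M; rewrite inE => /andP[_ /proper_sub/subsetP/(_ l lw')].
  rewrite inE ll /= => ul.
  case/orP: (Pl u ul) => [ut|tu'].
    case: (eqVneq u t) => [eut|nut]; first by apply: npu1; rewrite eut connect1.
    have [q uq qt] := last_step ut nut; by apply: nup1; rewrite -(tu q qt).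
  by apply: npu1; apply: connect_trans (connect1 pt) tu'.
Qed.
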